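(* Let $k,p$ be positive integers, let $G$ be a multigraph, and let $A_1,\ldots,A_p$ be vertex sets contained in $p$ pairwise distinct equivalence classes of $\sim_k$ (with $A_i$ contained in the $i$-th class). Then there is an edge set $X\subseteq E(G)$ with $|X|\le (p-1)(k-1)$ such that for all distinct $i,j\in\{1,\ldots,p\}$ the multigraph $G-X$ contains no $A_i$--$A_j$-path.
   Context: For vertices $u,v$ of a multigraph $G$, $u\sim_k v$ means that either $u=v$ or there are $k$ pairwise edge-disjoint $u$--$v$-paths in $G$; this is an equivalence relation on $V(G)$. $G-X$ denotes $G$ with the edges of $X$ deleted. An $A$--$B$-path is a path with one endvertex in $A$, one in $B$, internally disjoint from $A\cup B$. *)

(* Defs.v *)
From mathcomp Require Import all_boot.
Set Implicit Arguments. Unset Strict Implicit. Unset Printing Implicit Defensive.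

(* Parallel edges are
   distinct elements of E; loops are allowed (they never lie on a path). *)
Section MG.
Variables (V E : finType) (ends : E -> V * V).

Definition joins (e : E) (x y : V) : bool :=
  (ends e == (x, y)) || (ends e == (y, x)).

Fixpoint walk (x : V) (s : seq (E * V)) : bool :=
  match s with
  | [::] => true
  | (e, y) :: s' => joins e x y && walk y s'
  end.

Definition is_path (x : V) (s : seq (E * V)) : bool :=
  walk x s && uniq (x :: map snd s).

Definition path_end (x : V) (s : seq (E * V)) : V := last x (map snd s).

Definition internal (s : seq (E * V)) : seq V := take (size s).-1 (map snd s).

Definition edge_disjoint_paths (k : nat) (u v : V) : Prop :=
  exists P : 'I_k -> seq (E * V),
    (forall i, is_path u (P i) /\ path_end u (P i) = v) /\
    (forall i j, i != j -> forall e, e \in map fst (P i) -> e \notin map fst (P j)).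

Definition simk (k : nat) (u v : V) : Prop := u = v \/ edge_disjoint_paths k u v.

Definition AB_path_avoiding (X : {set E}) (A B : {set V}) (x : V) (s : seq (E * V)) : Prop :=
  is_path x s /\ x \in A /\ path_end x s \in B /\
  (forall y, y \in internal s -> (y \notin A) && (y \notin B)) /\
  (forall e, e \in map fst s -> e \notin X).
End MG.

(* Main.v *)
Require Import Defs.
From mathcomp Require Import all_boot all_algebra zify.
Import GRing.Theory Num.Theory.
Set Implicit Arguments. Unset Strict Implicit. Unset Printing Implicit Defensive.

Section MG2.
Variables (V E : finType) (ends : E -> V * V).

Fixpoint allsteps (P : E -> V -> V -> bool) (x : V) (s : seq (E * V)) : bool :=
  match s with
  | [::] => true
  | (e, y) :: s' => P e x y && allsteps P y s'
  end.

Lemma walk_allsteps x s : walk ends x s = allsteps (joins ends) x s.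
Proof. by elim: s x => [|[e y] s IH] x //=; rewrite IH. Qed.

Lemma allsteps_impl (P Q : E -> V -> V -> bool) x s :
  (forall e a b, P e a b -> Q e a b) -> allsteps P x s -> allsteps Q x s.
Proof.
move=> H; elim: s x => [|[e y] s IH] x //= /andP[H1 H2].
by rewrite H // IH.
Qed.

Lemma edge_ends y s e : allsteps (joins ends) y s -> e \in map fst s ->
  exists a b, joins ends e a b /\ a \in y :: map snd s /\ b \in y :: map snd s.
Proof.
elim: s y => [|[e0 y0] s IH] y //= /andP[J H]; rewrite in_cons => /orP[/eqP->|Hin].
  by exists y, y0; rewrite !in_cons !eqxx orbT.
have [a [b [Ja [Ha Hb]]]] := IH _ H Hin.
by exists a, b; split => //; split; rewrite in_cons ?Ha ?Hb orbT.
Qed.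

Lemma uniq_edges x s : allsteps (joins ends) x s -> uniq (x :: map snd s) ->
  uniq (map fst s).
Proof.
elim: s x => [|[e y] s IH] x //= /andP[J H] /andP[Hx Hu].
rewrite (IH y H Hu) andbT; apply/negP => Hin.
have [a [b [Ja [Ha Hb]]]] := edge_ends H Hin.
have : (x == a) || (x == b).
  move: J Ja; rewrite /joins.
  by case/orP=> /eqP E1; case/orP=> /eqP; rewrite E1 => -[] E2 E3; subst; rewrite eqxx ?orbT.
by case/orP=> /eqP Ex; subst x; [rewrite Ha in Hx | rewrite Hb in Hx].
Qed.

Definition rel_of (Q : E -> V -> V -> bool) : rel V :=
  fun x y => [exists e, joins ends e x y && (x != y) && Q e x y].

Definition stepP (Q : E -> V -> V -> bool) : E -> V -> V -> bool :=
  fun e a b => joins ends e a b && (a != b) && Q e a b.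

Lemma path_edges Q x p : path (rel_of Q) x p ->
  exists s, map snd s = p /\ allsteps (stepP Q) x s.
Proof.
elim: p x => [|y p IH] x /=; first by exists [::].
case/andP=> /existsP [e He] /IH [s [Hs Ha]].
by exists ((e, y) :: s); rewrite /= Hs Ha andbT.
Qed.

Lemma get_path Q x y : connect (rel_of Q) x y ->
  exists s, is_path ends x s /\ path_end x s = y /\ allsteps (stepP Q) x s.
Proof.
case/connectP=> p Hp ->.
case: (shortenP Hp) => p' Hp' Hu _.
have [s [Hs Ha]] := path_edges Hp'.
exists s; split; last by rewrite /path_end Hs.
rewrite /is_path Hs Hu andbT walk_allsteps.
by apply: allsteps_impl Ha => e a b /andP[/andP[]].
Qed.

Definition tl (e : E) := (ends e).1.
Definition hd (e : E) := (ends e).2.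
Definition bnd (S : {set V}) := [set e | (tl e \in S) != (hd e \in S)].

Lemma joins_bnd (S : {set V}) e a b : joins ends e a b -> (a \in S) != (b \in S) -> e \in bnd S.
Proof.
rewrite /joins inE /tl /hd => /orP[]/eqP->//= H.
by rewrite eq_sym.
Qed.

Lemma cross (S : {set V}) x s : walk ends x s -> (x \in S) != (path_end x s \in S) ->
  exists e, e \in map fst s /\ e \in bnd S.
Proof.
elim: s x => [|[e y] s IH] x /=; first by rewrite /path_end /= eqxx.
case/andP=> J W; rewrite /path_end /= => H.
case: (boolP ((x \in S) != (y \in S))) => Hxy.
  by exists e; rewrite in_cons eqxx (joins_bnd J Hxy).
have [e' [H1 H2]] : exists e', e' \in map fst s /\ e' \in bnd S.
  apply: IH W _; rewrite /path_end; move: Hxy H; rewrite negbK => /eqP->.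
  done.
by exists e'; rewrite in_cons H1 orbT.
Qed.

Lemma bndC (S : {set V}) : bnd (~: S) = bnd S.
Proof. by apply/setP=> e; rewrite !inE; case: (tl e \in S); case: (hd e \in S). Qed.

Section Flow.
Local Open Scope ring_scope.

Definition dir (e : E) (x y : V) : int := if ends e == (x, y) then 1 else -1.
Definition coef (e : E) (w : V) : int := ((tl e == w) : nat)%:Z - ((hd e == w) : nat)%:Z.
Definition net (f : E -> int) (w : V) : int := \sum_e f e * coef e w.
Definition ccoef (e : E) (S : {set V}) : int :=
  ((tl e \in S) : nat)%:Z - ((hd e \in S) : nat)%:Z.

Lemma sum_ind a (S : {set V}) : \sum_(w in S) ((a == w) : nat)%:Z = ((a \in S) : nat)%:Z.
Proof.
case: (boolP (a \in S)) => Ha.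
  rewrite (bigD1 a) //= eqxx big1 ?addr0 // => w /andP[_].
  by rewrite eq_sym => /negbTE ->.
rewrite big1 // => w Hw.
have -> : (a == w) = false by apply/negP => /eqP Ea; rewrite Ea Hw in Ha.
by [].
Qed.

Lemma cut_sum f (S : {set V}) : \sum_(w in S) net f w = \sum_e f e * ccoef e S.
Proof.
rewrite /net exchange_big /=; apply: eq_bigr => e _.
rewrite -mulr_sumr /coef /ccoef; congr (_ * _).
by rewrite sumrB !sum_ind.
Qed.

Lemma net_add f g w : net (fun e => f e + g e) w = net f w + net g w.
Proof. by rewrite /net -big_split; apply: eq_bigr => e _; rewrite mulrDl. Qed.
Lemma net_sub f g w : net (fun e => f e - g e) w = net f w - net g w.
Proof. by rewrite /net -sumrB; apply: eq_bigr => e _; rewrite mulrBl. Qed.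
Lemma net0 w : net (fun _ => 0) w = 0.
Proof. by rewrite /net big1 // => e _; rewrite mul0r. Qed.

Definition stepc e x y : E -> int := fun e' => if e' == e then dir e x y else 0.
Fixpoint cont x s : E -> int :=
  match s with
  | [::] => fun _ => 0
  | (e, y) :: s' => fun e' => stepc e x y e' + cont y s' e'
  end.

Lemma net_stepc e x y w : joins ends e x y -> x != y ->
  net (stepc e x y) w = ((x == w) : nat)%:Z - ((y == w) : nat)%:Z.
Proof.
move=> J Hxy; rewrite /net (bigD1 e) //= big1 ?addr0; last first.
  by move=> e' /negbTE He; rewrite /stepc He mul0r.
rewrite /stepc eqxx /dir /coef /tl /hd.
case/orP: J => /eqP->; first by rewrite eqxx mul1r.
have -> : ((y, x) == (x, y)) = false.
  by apply/negP => /eqP [] E1 _; rewrite E1 eqxx in Hxy.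
by rewrite /= mulN1r opprB.
Qed.

Lemma net_cont x s w : allsteps (fun e a b => joins ends e a b && (a != b)) x s ->
  net (cont x s) w = ((x == w) : nat)%:Z - ((path_end x s == w) : nat)%:Z.
Proof.
elim: s x => [|[e y] s IH] x /=.
  by rewrite net0 /path_end /= subrr.
case/andP => /andP[J Hxy] H.
rewrite net_add net_stepc // IH // /path_end /=.
by rewrite addrA subrK.
Qed.

Lemma cont_out x s e : e \notin map fst s -> cont x s e = 0.
Proof.
elim: s x => [|[e0 y] s IH] x //=.
rewrite in_cons negb_or => /andP[H1 H2].
by rewrite /stepc (negbTE H1) IH // add0r.
Qed.

Lemma cont_in P x s e : uniq (map fst s) -> allsteps P x s -> e \in map fst s ->
  exists a b, P e a b /\ cont x s e = dir e a b.
Proof.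
elim: s x => [|[e0 y] s IH] x //=.
case/andP=> Hn Hu /andP[Hp Ha]; rewrite in_cons => /orP[/eqP Ee|Hin].
  subst e0; exists x, y; split => //.
  by rewrite /stepc eqxx cont_out // addr0.
have Hne : e != e0 by apply: contraNneq Hn => <-.
have [a [b [H1 H2]]] := IH _ Hu Ha Hin.
by exists a, b; split => //; rewrite /stepc (negbTE Hne) add0r.
Qed.

Lemma dir_pm e a b : dir e a b = 1 \/ dir e a b = -1.
Proof. by rewrite /dir; case: ifP; [left|right]. Qed.

Lemma sum_card (B : {set E}) : \sum_e ((e \in B) : nat)%:Z = #|B|%:Z.
Proof.
rewrite (eq_bigr (fun e => if e \in B then 1 else 0)); last by move=> e _; case: (e \in B).
by rewrite -big_mkcond sumr_const natz.
Qed.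

Lemma sum_one : \sum_(e : E) (1 : int) = #|E|%:Z.
Proof. by rewrite sumr_const natz. Qed.


Variables u v : V.
Definition flowok (f : E -> int) :=
  (forall e, -1 <= f e <= 1) /\ (forall w, w != u -> w != v -> net f w = 0).
Definition resQ (f : E -> int) : E -> V -> V -> bool := fun e a b => dir e a b * f e <= 0.
Definition fwdQ (f : E -> int) : E -> V -> V -> bool := fun e a b => 1 <= dir e a b * f e.

Lemma cut_value f (S : {set V}) : flowok f -> u \in S -> v \notin S ->
  net f u = \sum_e f e * ccoef e S.
Proof.
case=> _ Hc Hu Hv; rewrite -cut_sum (bigD1 u) //= big1 ?addr0 // => w /andP[Hw Hwu].
by apply: Hc => //; apply: contraNneq Hv => <-.
Qed.

Lemma J1 e : joins ends e (tl e) (hd e).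
Proof. by rewrite /joins /tl /hd -surjective_pairing eqxx. Qed.
Lemma J2 e : joins ends e (hd e) (tl e).
Proof. by rewrite /joins /tl /hd -surjective_pairing eqxx orbT. Qed.
Lemma dir1 e : dir e (tl e) (hd e) = 1.
Proof. by rewrite /dir /tl /hd -surjective_pairing eqxx. Qed.
Lemma dir2 e : tl e != hd e -> dir e (hd e) (tl e) = -1.
Proof.
move=> H; rewrite /dir.
have -> : (ends e == (hd e, tl e)) = false.
  apply/negP; rewrite {1}(surjective_pairing (ends e)) => /eqP [] E1 _.
  by move: H; rewrite /tl /hd E1 eqxx.
by [].
Qed.

Lemma sat_cut f (S : {set V}) : flowok f ->
  (forall x y, x \in S -> rel_of (resQ f) x y -> y \in S) ->
  forall e, f e * ccoef e S = ((e \in bnd S) : nat)%:Z.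
Proof.
case=> Hb _ Hcl e; rewrite /ccoef inE.
have := Hb e.
case Ht: (tl e \in S); case Hh: (hd e \in S) => //= Hfe; rewrite ?subrr ?mulr0 //.
- have Hne : tl e != hd e by apply/negP => /eqP E1; rewrite -E1 Ht in Hh.
  case: (lerP (f e) 0) => Hf; last by lia.
  have : hd e \in S.
    apply: (Hcl (tl e)) => //; apply/existsP; exists e.
    by rewrite J1 Hne /resQ dir1 mul1r Hf.
  by rewrite Hh.
- have Hne : tl e != hd e by apply/negP => /eqP E1; rewrite E1 Hh in Ht.
  case: (lerP 0 (f e)) => Hf; last by lia.
  have : tl e \in S.
    apply: (Hcl (hd e)) => //; apply/existsP; exists e.
    by rewrite J2 eq_sym Hne /resQ dir2 // mulN1r oppr_le0 Hf.
  by rewrite Ht.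
Qed.

Lemma fwd_cut f (S : {set V}) : flowok f ->
  (forall x y, x \in S -> rel_of (fwdQ f) x y -> y \in S) ->
  forall e, f e * ccoef e S <= 0.
Proof.
case=> Hb _ Hcl e; rewrite /ccoef.
have := Hb e.
case Ht: (tl e \in S); case Hh: (hd e \in S) => //= Hfe; rewrite ?subrr ?mulr0 //.
- have Hne : tl e != hd e by apply/negP => /eqP E1; rewrite -E1 Ht in Hh.
  case: (lerP (f e) 0) => Hf; first by lia.
  have : hd e \in S.
    apply: (Hcl (tl e)) => //; apply/existsP; exists e.
    rewrite J1 Hne /fwdQ dir1 mul1r /=; lia.
  by rewrite Hh.
- have Hne : tl e != hd e by apply/negP => /eqP E1; rewrite E1 Hh in Ht.
  case: (lerP 0 (f e)) => Hf; first by lia.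
  have : tl e \in S.
    apply: (Hcl (hd e)) => //; apply/existsP; exists e.
    rewrite J2 eq_sym Hne /fwdQ dir2 // mulN1r /=; lia.
  by rewrite Ht.
Qed.

Lemma find_flow_path f : flowok f -> 0 < net f u ->
  exists s, is_path ends u s /\ path_end u s = v /\ allsteps (stepP (fwdQ f)) u s.
Proof.
move=> Hf Hpos.
case: (boolP (connect (rel_of (fwdQ f)) u v)) => Hc; first exact: get_path.
pose T := [set w | connect (rel_of (fwdQ f)) u w].
have HuT : u \in T by rewrite inE connect0.
have HvT : v \notin T by rewrite inE.
have Hcl : forall x y, x \in T -> rel_of (fwdQ f) x y -> y \in T.
  by move=> x y; rewrite !inE => Hx Hxy; apply: connect_trans Hx (connect1 Hxy).
have H2 := cut_value Hf HuT HvT.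
have H1 : \sum_e f e * ccoef e T <= 0.
  rewrite -oppr_ge0 -sumrN; apply: sumr_ge0 => e _; rewrite oppr_ge0.
  exact: fwd_cut.
rewrite H2 in Hpos; lia.
Qed.

Lemma remove_path f s : flowok f -> is_path ends u s -> path_end u s = v -> u != v ->
  allsteps (stepP (fwdQ f)) u s ->
  [/\ flowok (fun e => f e - cont u s e),
      net (fun e => f e - cont u s e) u = net f u - 1 &
      forall e, (e \in map fst s -> f e - cont u s e = 0 /\ f e != 0) /\
                (e \notin map fst s -> f e - cont u s e = f e)].
Proof.
move=> [Hb Hc] /andP[W U] He Huv Ha.
have Hue : uniq (map fst s) by apply: uniq_edges U; rewrite -walk_allsteps.
have Ha' : allsteps (fun e a b => joins ends e a b && (a != b)) u s.
  by apply: allsteps_impl Ha => e a b /andP[].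
have Hnet : forall w, net (fun e => f e - cont u s e) w
    = net f w - (((u == w) : nat)%:Z - ((v == w) : nat)%:Z).
  by move=> w; rewrite net_sub net_cont // He.
have Hpt : forall e, (e \in map fst s -> f e - cont u s e = 0 /\ f e != 0) /\
                (e \notin map fst s -> f e - cont u s e = f e).
  move=> e; split => Hin; last by rewrite cont_out // subr0.
  have [a [b [/andP[_ Hq] ->]]] := cont_in Hue Ha Hin.
  move: Hq (Hb e); rewrite /fwdQ; case: (dir_pm e a b) => ->; lia.
split => //.
- split.
    move=> e; have [H1 H2] := Hpt e; case: (boolP (e \in map fst s)) => Hin.
      by rewrite (H1 Hin).1.
    by rewrite (H2 Hin); exact: Hb.
  move=> w Hwu Hwv; rewrite Hnet Hc // eq_sym (negbTE Hwu) eq_sym (negbTE Hwv).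
  by rewrite /=; lia.
- by rewrite Hnet eqxx eq_sym (negbTE Huv).
Qed.

Lemma augment_path f s : flowok f -> is_path ends u s -> path_end u s = v -> u != v ->
  allsteps (stepP (resQ f)) u s ->
  flowok (fun e => f e + cont u s e) /\ net (fun e => f e + cont u s e) u = net f u + 1.
Proof.
move=> [Hb Hc] /andP[W U] He Huv Ha.
have Hue : uniq (map fst s) by apply: uniq_edges U; rewrite -walk_allsteps.
have Ha' : allsteps (fun e a b => joins ends e a b && (a != b)) u s.
  by apply: allsteps_impl Ha => e a b /andP[].
have Hnet : forall w, net (fun e => f e + cont u s e) w
    = net f w + (((u == w) : nat)%:Z - ((v == w) : nat)%:Z).
  by move=> w; rewrite net_add net_cont // He.
split; last by rewrite Hnet eqxx eq_sym (negbTE Huv).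
split.
  move=> e; case: (boolP (e \in map fst s)) => Hin; last by rewrite cont_out // addr0; exact: Hb.
  have [a [b [/andP[_ Hq] ->]]] := cont_in Hue Ha Hin.
  move: Hq (Hb e); rewrite /resQ; case: (dir_pm e a b) => ->; lia.
move=> w Hwu Hwv; rewrite Hnet Hc // eq_sym (negbTE Hwu) eq_sym (negbTE Hwv).
by rewrite /=; lia.
Qed.

Lemma net_bound f : flowok f -> net f u <= #|E|%:Z.
Proof.
case=> Hb _; rewrite -sum_one /net; apply: ler_sum => e _.
have := Hb e; rewrite /coef; case: (tl e == u); case: (hd e == u) => /=; lia.
Qed.

Lemma maxflow : u != v -> exists f (S : {set V}),
  [/\ flowok f, u \in S, v \notin S & net f u = #|bnd S|%:Z].
Proof.
move=> Huv.
suff H : forall n f, flowok f -> #|E|%:Z - net f u <= n%:Z -> exists f (S : {set V}),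
  [/\ flowok f, u \in S, v \notin S & net f u = #|bnd S|%:Z].
  apply: (H #|E| (fun _ => 0)); last by rewrite net0; lia.
  by split => [e|w _ _]; [|rewrite net0].
have Hcut : forall f, flowok f -> ~~ connect (rel_of (resQ f)) u v -> exists f (S : {set V}),
  [/\ flowok f, u \in S, v \notin S & net f u = #|bnd S|%:Z].
  move=> f Hf Hc.
  pose T := [set w | connect (rel_of (resQ f)) u w].
  have HuT : u \in T by rewrite inE connect0.
  have HvT : v \notin T by rewrite inE.
  have Hcl : forall x y, x \in T -> rel_of (resQ f) x y -> y \in T.
    by move=> x y; rewrite !inE => Hx Hxy; apply: connect_trans Hx (connect1 Hxy).
  exists f, T; split => //.
  by rewrite (cut_value Hf HuT HvT) (eq_bigr _ (fun e _ => sat_cut Hf Hcl e)) sum_card.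
elim=> [|n IH] f Hf Hn.
  case: (boolP (connect (rel_of (resQ f)) u v)) => Hc; last exact: (Hcut f Hf Hc).
  have [s [Hp [He Ha]]] := get_path Hc.
  have [Hg Hv] := augment_path Hf Hp He Huv Ha.
  have := net_bound Hg; rewrite Hv; lia.
case: (boolP (connect (rel_of (resQ f)) u v)) => Hc; last exact: (Hcut f Hf Hc).
have [s [Hp [He Ha]]] := get_path Hc.
have [Hg Hv] := augment_path Hf Hp He Huv Ha.
apply: IH Hg _; rewrite Hv; lia.
Qed.

Lemma paths_of_flow : u != v -> forall (m : nat) f, flowok f -> net f u = m%:Z ->
  exists P : 'I_m -> seq (E * V),
   [/\ (forall i, is_path ends u (P i) /\ path_end u (P i) = v),
       (forall i j, i != j -> forall e, e \in map fst (P i) -> e \notin map fst (P j)) &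
       (forall i e, e \in map fst (P i) -> f e != 0)].
Proof.
move=> Huv; elim=> [|m IH] f Hf Hm.
  by exists (fun _ => [::]); split => -[].
have Hpos : 0 < net f u by rewrite Hm.
have [s [Hp [He Ha]]] := find_flow_path Hf Hpos.
have [Hg Hgv Hpt] := remove_path Hf Hp He Huv Ha.
have Hm' : net (fun e => f e - cont u s e) u = m%:Z by rewrite Hgv Hm; lia.
have [P [HP1 HP2 HP3]] := IH _ Hg Hm'.
exists (fun i => if unlift ord_max i is Some j then P j else s).
split.
- by move=> i; case: unliftP => [j _|_].
- move=> i j Hij e; case: unliftP => [a Ea|Ea]; case: unliftP => [b Eb|Eb].
  + by apply: HP2; apply: contraNneq Hij => Eab; rewrite Ea Eb Eab.
  + move=> Hin; apply/negP => Hs; have [H0 _] := (Hpt e).1 Hs.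
    by have := HP3 _ _ Hin; rewrite H0 eqxx.
  + move=> Hs; apply/negP => Hin; have [H0 _] := (Hpt e).1 Hs.
    by have := HP3 _ _ Hin; rewrite H0 eqxx.
  + by rewrite Ea Eb eqxx in Hij.
- move=> i e; case: unliftP => [a _|_] Hin.
  + have Hn := HP3 _ _ Hin; case: (boolP (e \in map fst s)) => Hs.
      by rewrite ((Hpt e).1 Hs).1 eqxx in Hn.
    by rewrite -((Hpt e).2 Hs).
  + exact: ((Hpt e).1 Hin).2.
Qed.

Lemma menger (k : nat) : u != v -> ~ edge_disjoint_paths ends k u v ->
  exists S : {set V}, [/\ u \in S, v \notin S & (#|bnd S| < k)%N].
Proof.
move=> Huv Hn.
have [f [S [Hf HuS HvS Hval]]] := maxflow Huv.
exists S; split => //; rewrite ltnNge; apply/negP => Hk; apply: Hn.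
have [P [HP1 HP2 _]] := paths_of_flow Huv Hf Hval.
exists (fun i => P (widen_ord Hk i)); split.
  by move=> i; exact: HP1.
move=> i j Hij; apply: HP2.
by apply: contra Hij => /eqP/(congr1 val) /= Hv; apply/eqP/val_inj.
Qed.
End Flow.

Lemma simk_side k (S : {set V}) x y : simk ends k x y -> #|bnd S| < k ->
  (x \in S) = (y \in S).
Proof.
case=> [->//|[P [HP1 HP2]]] Hk.
apply/eqP; apply: contraTT Hk => Hne; rewrite -leqNgt.
have H : forall i, exists e, (e \in map fst (P i)) && (e \in bnd S).
  move=> i; have [Hp He] := HP1 i; case/andP: Hp => W _.
  have [e [H1 H2]] := cross W (etrans (congr1 (fun z => (x \in S) != (z \in S)) He) Hne).
  by exists e; rewrite H1 H2.
pose g i := xchoose (H i).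
have Hgi : forall i, (g i \in map fst (P i)) && (g i \in bnd S) := fun i => xchooseP (H i).
have Hg : injective g.
  move=> i j Hij; case: (eqVneq i j) => // Hne'; exfalso.
  have /andP[Hi _] := Hgi i; have /andP[Hj _] := Hgi j.
  by have := HP2 _ _ Hne' _ Hi; rewrite Hij Hj.
have Hsub : [set g i | i : 'I_k] \subset bnd S.
  by apply/subsetP => e /imsetP [i _ ->]; have /andP[] := Hgi i.
have := subset_leq_card Hsub.
by rewrite card_imset // card_ord.
Qed.

Lemma avoid_sub (X Y : {set E}) A1 A2 x s : AB_path_avoiding ends X A1 A2 x s ->
  Y \subset X -> AB_path_avoiding ends Y A1 A2 x s.
Proof.
case=> [H1 [H2 [H3 [H4 H5]]]] Hs; do !split => //.
by move=> e He; apply: contra (H5 _ He); exact: (subsetP Hs).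
Qed.

Section Main.
Variables (k p : nat) (A : 'I_p -> {set V}) (c : 'I_p -> V).
Hypothesis hc : forall i j : 'I_p, i != j -> ~ simk ends k (c i) (c j).
Hypothesis hA : forall (i : 'I_p) (x : V), x \in A i -> simk ends k x (c i).

Lemma main_ind : forall n (I : {set 'I_p}), #|I| <= n ->
  exists X : {set E}, #|X| <= (#|I| - 1) * (k - 1) /\
    forall i j, i \in I -> j \in I -> i != j ->
      ~ exists x s, AB_path_avoiding ends X (A i) (A j) x s.
Proof.
elim=> [|n IH] I HI.
  exists set0; split; first by rewrite cards0.
  move=> i j Hi; move: HI; rewrite leqn0 cards_eq0 => /eqP HI.
  by rewrite HI inE in Hi.
case: (boolP [exists i, exists j, [&& i \in I, j \in I & i != j]]) => Hex; last first.
  exists set0; split; first by rewrite cards0.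
  move=> i j Hi Hj Hij; exfalso; move/negP: Hex; apply.
  by apply/existsP; exists i; apply/existsP; exists j; rewrite Hi Hj Hij.
case/existsP: Hex => i /existsP [j /and3P [Hi Hj Hij]].
have Hcij := hc Hij.
have Hne : c i != c j by apply/eqP => E1; apply: Hcij; left.
have Hnd : ~ edge_disjoint_paths ends k (c i) (c j) by move=> H; apply: Hcij; right.
have [S [HiS HjS HS]] := menger Hne Hnd.
pose T := [set l | c l \in S].
pose I1 := I :&: T; pose I2 := I :\: T.
have Hi1 : i \in I1 by rewrite !inE Hi HiS.
have Hj2 : j \in I2 by rewrite !inE Hj HjS.
have Hcard : #|I1| + #|I2| = #|I| := cardsID T I.
have H1pos : 0 < #|I1| by apply/card_gt0P; exists i.
have H2pos : 0 < #|I2| by apply/card_gt0P; exists j.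
have HI1 : #|I1| <= n by lia.
have HI2 : #|I2| <= n by lia.
have [X1 [HX1 HP1]] := IH I1 HI1.
have [X2 [HX2 HP2]] := IH I2 HI2.
exists (bnd S :|: X1 :|: X2); split.
  have U1 := cardsUI (bnd S) X1.
  have U2 := cardsUI (bnd S :|: X1) X2.
  nia.
move=> i' j' Hi' Hj' Hij' [x [s Hp]].
have Hsame : (c i' \in S) = (c j' \in S).
  apply/eqP/negP => Hd; case: Hp => Hpath [HxA [HyA [_ Hav]]].
  have Ex := simk_side (hA HxA) HS.
  have Ey := simk_side (hA HyA) HS.
  case/andP: Hpath => W _.
  have Hx : (x \in S) != (path_end x s \in S) by rewrite Ex Ey; apply/negP.
  have [e [He1 He2]] := cross W Hx.
  by move: (Hav e He1); rewrite !in_setU He2.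
case Hci: (c i' \in S); rewrite Hci in Hsame.
  apply: (HP1 i' j') => //; first by rewrite !inE Hi' Hci.
    by rewrite !inE Hj' -Hsame.
  exists x, s; apply: avoid_sub Hp _.
  by apply/subsetP => e He; rewrite !in_setU He orbT.
apply: (HP2 i' j') => //; first by rewrite !inE Hi' Hci.
  by rewrite !inE Hj' -Hsame.
exists x, s; apply: avoid_sub Hp _.
by apply/subsetP => e He; rewrite !in_setU He orbT.
Qed.
End Main.
End MG2.

Theorem lemma10 (V E : finType) (ends : E -> V * V) (k p : nat)
  (hk : 0 < k) (hp : 0 < p)
  (A : 'I_p -> {set V}) (c : 'I_p -> V)
  (hc : forall i j : 'I_p, i != j -> ~ simk ends k (c i) (c j))
  (hA : forall (i : 'I_p) (x : V), x \in A i -> simk ends k x (c i)) :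
  exists X : {set E},
    #|X| <= (p - 1) * (k - 1) /\
    (forall i j : 'I_p, i != j ->
       ~ exists (x : V) (s : seq (E * V)), AB_path_avoiding ends X (A i) (A j) x s).
Proof.
have [X [HX HP]] := main_ind hc hA (leqnn #|[set: 'I_p]|).
rewrite cardsT card_ord in HX.
by exists X; split => // i j Hij; apply: HP; rewrite ?inE.
Qed.
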